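(* Let $\sigma=\{\sigma_n\}$ and $\omega=\{\omega_n\}$ be quantum sources on the same sequence of finite-dimensional Hilbert spaces, $t\in(0,1)$, and $\rho_n=t\sigma_n+(1-t)\omega_n$. Then the strong converse rate of $\rho$ is \[ \mathcal{R}^*=\underline{S}(\rho)=\min\big[\underline{S}(\sigma),\underline{S}(\omega)\big]. \]
   Context: For self-adjoint $A=\sum_i\lambda_i|i\rangle\langle i|$, $\{A\ge0\}:=\sum_{\lambda_i\ge0}|i\rangle\langle i|$ and $\{A\ge B\}:=\{A-B\ge0\}$. For a source $\tau=\{\tau_n\}$, the spectral inf-entropy rate is $\underline{S}(\tau)=\sup\{\gamma:\ \limsup_n\mathrm{Tr}[\{\tau_n\ge e^{-n\gamma}I_n\}(\tau_n-e^{-n\gamma}I_n)]=0\}$ (natural logarithms). The strong converse rate $\mathcal{R}^*$ of a source is the supremum of rates $R$ such that every compression scheme of rate $R$ has entanglement fidelity tending to $0$; it equals $\underline{S}$ of the source. *)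

(* Defs.v *)
From HB Require Import structures.
From mathcomp Require Import all_boot all_order all_algebra.
From mathcomp Require Import sesquilinear spectral.
From mathcomp Require Import complex.
From mathcomp Require Import all_classical all_reals all_analysis.
Set Implicit Arguments. Unset Strict Implicit. Unset Printing Implicit Defensive.
Import Order.TTheory GRing.Theory Num.Theory.
Local Open Scope ring_scope.
Local Open Scope complex_scope.

Definition density_mx (R : realType) (d : nat) (A : 'M[R[i]]_d) : Prop :=
  [/\ A \is hermsymmx,
      (forall v : 'rV[R[i]]_d, 0 <= (v *m A *m (map_mx Num.conj v)^T) 0 0)
    & \tr A = 1].

Definition quantum_source (R : realType) (d : nat -> nat)
  (tau : forall n, 'M[R[i]]_(d n)) : Prop := forall n, density_mx (tau n).

(* Spectral projection {A >= 0} = sum of eigenprojections for eigenvalues >= 0,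
   computed from the unitary diagonalisation A = P^-1 diag(lambda) P. *)
Definition nonneg_proj (R : realType) (d : nat) (A : 'M[R[i]]_d) : 'M[R[i]]_d :=
  invmx (spectralmx A)
  *m diag_mx (\row_j (if 0 <= spectral_diag A 0 j then 1 else 0))
  *m spectralmx A.

(* Tr[{tau_n >= c I}(tau_n - c I)] with c = e^{-n gamma} (real part; it is real). *)
Definition spec_term (R : realType) (d : nat -> nat)
  (tau : forall n, 'M[R[i]]_(d n)) (gamma : R) (n : nat) : R :=
  let c : R[i] := (expR (- (n%:R * gamma)))%:C in
  complex.Re (\tr (nonneg_proj (tau n - c%:M) *m (tau n - c%:M))).

Definition spec_inf_entropy_rate (R : realType) (d : nat -> nat)
  (tau : forall n, 'M[R[i]]_(d n)) : \bar R :=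
  ereal_sup [set (gamma%:E)%E | gamma in
     [set gamma : R | limn_esup (fun n => (spec_term tau gamma n)%:E) = 0%E]].

(* Main.v *)
Require Import Defs.
From HB Require Import structures.
From mathcomp Require Import all_boot all_order all_algebra.
From mathcomp Require Import sesquilinear spectral complex.
From mathcomp Require Import all_classical all_reals all_analysis.
From mathcomp Require Import ring lra.
Import Order.TTheory GRing.Theory Num.Theory.
Local Open Scope ring_scope.

Set Implicit Arguments. Unset Strict Implicit.
Local Open Scope sesquilinear_scope.
Local Open Scope complex_scope.

Lemma tr_diag_mul (R : realType) n (D : 'rV[R[i]]_n) (M : 'M[R[i]]_n) :
  \tr (diag_mx D *m M) = \sum_(k < n) D 0 k * M k k.
Proof. by apply: eq_bigr => k _; rewrite mul_diag_mx mxE. Qed.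

Lemma entry_WLW (R : realType) n (W : 'M[R[i]]_n) (L : 'rV_n) k :
  (W *m diag_mx L *m W ^t*) k k = \sum_(j < n) L 0 j * (W k j * Num.conj (W k j)).
Proof.
rewrite mul_mx_diag !mxE; apply: eq_bigr => j _; rewrite !mxE.
by rewrite mulrCA mulrA.
Qed.

Lemma trQX (R : realType) n (V U : 'M[R[i]]_n) (D L : 'rV[R[i]]_n) :
  V \is unitarymx -> U \is unitarymx ->
  \tr ((invmx V *m diag_mx D *m V) *m (invmx U *m diag_mx L *m U)) =
  \sum_(j < n) L 0 j * (\sum_(k < n) D 0 k *
      ((V *m U^t*) k j * Num.conj ((V *m U^t*) k j))).
Proof.
move=> uV uU; rewrite !invmx_unitary //.
have -> : V ^t* *m diag_mx D *m V *m (U ^t* *m diag_mx L *m U) =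
   V ^t* *m (diag_mx D *m (V *m U^t*) *m diag_mx L *m U) by rewrite !mulmxA.
rewrite mxtrace_mulC.
have -> : diag_mx D *m (V *m U^t*) *m diag_mx L *m U *m V^t* =
   diag_mx D *m ((V *m U^t*) *m diag_mx L *m (V *m U^t*)^t*).
  by rewrite trmx_mul map_mxM trmxCK !mulmxA.
rewrite tr_diag_mul.
under eq_bigr do rewrite entry_WLW big_distrr /=.
rewrite exchange_big /=; apply: eq_bigr => j _; rewrite big_distrr /=.
by apply: eq_bigr => k _; rewrite mulrCA.
Qed.

Lemma colnorm (R : realType) n (V U : 'M[R[i]]_n) j :
  V \is unitarymx -> U \is unitarymx ->
  \sum_(k < n) ((V *m U^t*) k j * Num.conj ((V *m U^t*) k j)) = 1.
Proof.
move=> uV uU.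
have H : (V *m U^t*)^t* *m (V *m U^t*) = 1%:M.
  rewrite trmx_mul map_mxM trmxCK.
  rewrite -(mulmxA U) (mulmxA (V^t*)) -invmx_unitary // mulVmx ?unitarymx_unit //.
  by rewrite mul1mx; apply/unitarymxP.
move/matrixP: H => /(_ j j); rewrite !mxE eqxx /= => Hjj.
apply: etrans Hjj; apply: eq_bigr => k _; by rewrite !mxE mulrC.
Qed.

Definition Qf (R : realType) n (V : 'M[R[i]]_n) (D : 'rV[R[i]]_n) :=
  invmx V *m diag_mx D *m V.

Definition Gf (R : realType) n (X : 'M[R[i]]_n) := \tr (nonneg_proj X *m X).

Lemma spec_decomp (R : realType) n (X : 'M[R[i]]_n) : X \is hermsymmx ->
  X = Qf (spectralmx X) (spectral_diag X).
Proof. by move=> /hermitian_normalmx /orthomx_spectralP. Qed.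

Lemma Gf_eq (R : realType) n (X : 'M[R[i]]_n) : X \is hermsymmx ->
  Gf X = \sum_(j < n) spectral_diag X 0 j *
            (if 0 <= spectral_diag X 0 j then 1 else 0).
Proof.
move=> hX; have uU := spectral_unitarymx X.
rewrite /Gf {2}(spec_decomp hX) /nonneg_proj trQX //.
rewrite (unitarymxP uU); apply: eq_bigr => j _; congr (_ * _).
rewrite (bigD1 j) //= big1 ?addr0; last first.
  by move=> k /negbTE kj; rewrite !mxE kj /= mulr0n mul0r mulr0.
by rewrite !mxE eqxx /= mulr1n -[Num.conj 1]/(1^*)%C conjc1 !mulr1.
Qed.

Lemma KL (R : realType) n (X V : 'M[R[i]]_n) (D : 'rV[R[i]]_n) :
  X \is hermsymmx -> V \is unitarymx -> (forall k, 0 <= D 0 k <= 1) ->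
  \tr (Qf V D *m X) <= Gf X.
Proof.
move=> hX uV HD; have uU := spectral_unitarymx X.
have Lr := hermitian_spectral_diag_real hX.
rewrite Gf_eq // {1}(spec_decomp hX) /Qf trQX //.
apply: ler_sum => j _.
set W := V *m _.
set q := \sum_(k < n) _.
have q0 : 0 <= q.
  apply: sumr_ge0 => k _; apply: mulr_ge0; first by case/andP: (HD k).
  by rewrite mul_conjC_ge0.
have q1 : q <= 1.
  rewrite -(colnorm j uV uU) -/W; apply: ler_sum => k _.
  case/andP: (HD k) => D0 D1; apply: ler_piMl => //.
  by rewrite mul_conjC_ge0.
have rL : spectral_diag X 0 j \is Num.real by move/mxOverP: Lr; apply.
case: ifP => L0.
  by rewrite mulr1; apply: ler_piMr.
rewrite mulr0; apply: mulr_le0_ge0 => //.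
move/negbT: L0 => L0; apply: ltW; by rewrite real_ltNge ?rpred0.
Qed.

Lemma PL (R : realType) n (M V : 'M[R[i]]_n) (D : 'rV[R[i]]_n) :
  (forall v : 'rV[R[i]]_n, 0 <= (v *m M *m (map_mx Num.conj v)^T) 0 0) ->
  V \is unitarymx -> (forall k, 0 <= D 0 k) ->
  0 <= \tr (Qf V D *m M).
Proof.
move=> HM uV HD; rewrite /Qf invmx_unitary // -!mulmxA mxtrace_mulC.
rewrite -!mulmxA tr_diag_mul; apply: sumr_ge0 => k _.
apply: mulr_ge0 => //.
have := HM (row k V); congr (0 <= _).
rewrite -mulmxA !mxE; apply: eq_bigr => j _; rewrite !mxE; congr (_ * _).
by apply: eq_bigr => l _; rewrite !mxE.
Qed.

Lemma psd1 (R : realType) n :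
  forall v : 'rV[R[i]]_n, 0 <= (v *m 1%:M *m (map_mx Num.conj v)^T) 0 0.
Proof.
move=> v; rewrite mulmx1 !mxE; apply: sumr_ge0 => j _; rewrite !mxE.
by rewrite mul_conjC_ge0.
Qed.

Lemma unitary1 (R : realType) n : (1%:M : 'M[R[i]]_n) \is unitarymx.
Proof. by apply/unitarymxP; rewrite trmx1 map_mx1 mulmx1. Qed.

Lemma npQ (R : realType) n (X : 'M[R[i]]_n) :
  nonneg_proj X = Qf (spectralmx X)
     (\row_j (if 0 <= spectral_diag X 0 j then 1 else 0)).
Proof. by []. Qed.

Lemma npD (R : realType) n (X : 'M[R[i]]_n) k :
  0 <= (\row_j (if 0 <= spectral_diag X 0 j then 1 else 0) : 'rV[R[i]]_n) 0 k <= 1.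
Proof. by rewrite mxE; case: ifP; rewrite ?lexx ?ler01. Qed.

Lemma KLnp (R : realType) n (X Y : 'M[R[i]]_n) : X \is hermsymmx ->
  \tr (nonneg_proj Y *m X) <= Gf X.
Proof. by move=> hX; rewrite npQ; apply: KL => //; [apply: spectral_unitarymx|apply: npD]. Qed.

Lemma PLnp (R : realType) n (M Y : 'M[R[i]]_n) :
  (forall v : 'rV[R[i]]_n, 0 <= (v *m M *m (map_mx Num.conj v)^T) 0 0) ->
  0 <= \tr (nonneg_proj Y *m M).
Proof.
move=> HM; rewrite npQ; apply: PL => //; first by apply: spectral_unitarymx.
by move=> k; case/andP: (npD Y k).
Qed.

Lemma Gf_ge0 (R : realType) n (X : 'M[R[i]]_n) : X \is hermsymmx -> 0 <= Gf X.
Proof.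
move=> hX; have := KL hX (unitary1 R n) (D := 0).
rewrite /Qf raddf0 mulmx0 !mul0mx mxtrace0; apply.
by move=> k; rewrite mxE lexx ler01.
Qed.

Lemma hermP (R : realType) n (X : 'M[R[i]]_n) :
  X \is hermsymmx <-> forall i j, X i j = Num.conj (X j i).
Proof.
split => [/is_hermitianmxP H i j | H].
  by rewrite {1}H !mxE expr0 mul1r.
by apply/is_hermitianmxP/matrixP => i j; rewrite !mxE expr0 mul1r H.
Qed.

Lemma conj_real (R : realType) (x : R) : Num.conj (x%:C) = x%:C.
Proof. exact: conjc_real. Qed.

Lemma herm_sub (R : realType) n (A : 'M[R[i]]_n) (c : R) :
  A \is hermsymmx -> A - (c%:C)%:M \is hermsymmx.
Proof.
move/hermP => H; apply/hermP => i j; rewrite !mxE H rmorphB /= eq_sym.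
by case: (j == i); rewrite ?mulr1n ?mulr0n ?conj_real ?rmorph0.
Qed.

Lemma herm_lin (R : realType) n (A B : 'M[R[i]]_n) (a b : R) :
  A \is hermsymmx -> B \is hermsymmx -> a%:C *: A + b%:C *: B \is hermsymmx.
Proof.
move/hermP => HA /hermP HB; apply/hermP => i j; rewrite !mxE HA HB rmorphD /=.
by rewrite !rmorphM /= !conj_real.
Qed.

Lemma Gf_anti (R : realType) n (A : 'M[R[i]]_n) (c c' : R) :
  A \is hermsymmx -> c <= c' ->
  Gf (A - (c'%:C)%:M) <= Gf (A - (c%:C)%:M).
Proof.
move=> hA cc.
have E : A - (c'%:C)%:M = (A - (c%:C)%:M) - ((c' - c)%:C)%:M.
  apply/matrixP => i j; rewrite !mxE.
  case: (i == j) => /=; rewrite ?mulr1n ?mulr0n ?subr0 //.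
  by rewrite raddfB /=; ring.
rewrite /Gf {2}E mulmxBr -[((c' - c)%:C)%:M]scalemx1 -scalemxAr raddfB /= mxtraceZ.
apply: le_trans (@KLnp R n _ (A - (c'%:C)%:M) (herm_sub c hA)); rewrite gerBl.
apply: mulr_ge0; first by rewrite ler0c subr_ge0.
exact: PLnp (@psd1 R n).
Qed.

Lemma Gf_convex (R : realType) n (A B : 'M[R[i]]_n) (c t : R) :
  A \is hermsymmx -> B \is hermsymmx -> 0 <= t <= 1 ->
  Gf (t%:C *: A + (1 - t)%:C *: B - (c%:C)%:M) <=
  t%:C * Gf (A - (c%:C)%:M) + (1 - t)%:C * Gf (B - (c%:C)%:M).
Proof.
move=> hA hB /andP[t0 t1].
have E : t%:C *: A + (1 - t)%:C *: B - (c%:C)%:M =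
   t%:C *: (A - (c%:C)%:M) + (1 - t)%:C *: (B - (c%:C)%:M).
  apply/matrixP => i j; rewrite !mxE.
  case: (i == j) => /=; rewrite ?mulr1n ?mulr0n ?subr0 ?mulr0 ?addr0 //.
  by rewrite rmorphB rmorph1 /=; ring.
rewrite [Gf (t%:C *: _ + _ - _)]/Gf {2}E mulmxDr -!scalemxAr mxtraceD !mxtraceZ.
apply: lerD; apply: ler_wpM2l.
- by rewrite ler0c.
- exact: (KLnp _ (herm_sub c hA)).
- by rewrite ler0c subr_ge0.
- exact: (KLnp _ (herm_sub c hB)).
Qed.

Lemma Gf_mono (R : realType) n (A B : 'M[R[i]]_n) (c t : R) :
  A \is hermsymmx -> B \is hermsymmx ->
  (forall v : 'rV[R[i]]_n, 0 <= (v *m B *m (map_mx Num.conj v)^T) 0 0) ->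
  0 < t <= 1 ->
  t%:C * Gf (A - ((c / t)%:C)%:M) <=
  Gf (t%:C *: A + (1 - t)%:C *: B - (c%:C)%:M).
Proof.
move=> hA hB' hB /andP[t0 t1].
have ht : t%:C * (c / t)%:C = c%:C.
  by rewrite -rmorphM mulrC -mulrA mulVf ?mulr1 // gt_eqF.
have E : t%:C *: A + (1 - t)%:C *: B - (c%:C)%:M =
   t%:C *: (A - ((c / t)%:C)%:M) + (1 - t)%:C *: B.
  apply/matrixP => i j; rewrite !mxE.
  case: (i == j) => /=; rewrite ?mulr1n ?mulr0n ?subr0 ?mulr0 ?addr0 //.
  by rewrite mulrBr ht; ring.
have hM : t%:C *: A + (1 - t)%:C *: B - (c%:C)%:M \is hermsymmx.
  by apply: herm_sub; apply: herm_lin.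
apply: le_trans (@KLnp R n _ (A - ((c / t)%:C)%:M) hM).
rewrite E mulmxDr -!scalemxAr mxtraceD !mxtraceZ /Gf.
rewrite lerDl; apply: mulr_ge0; first by rewrite ler0c subr_ge0.
exact: PLnp.
Qed.

Lemma st_eq (R : realType) (d : nat -> nat) (tau : forall n, 'M[R[i]]_(d n)) g n :
  spec_term tau g n =
  complex.Re (Gf (tau n - ((expR (- (n%:R * g)))%:C)%:M)).
Proof. by []. Qed.

Lemma Re_le (R : realType) (z w : R[i]) : z <= w -> complex.Re z <= complex.Re w.
Proof. by rewrite lecE => /andP[]. Qed.

Lemma Re_lin (R : realType) (x y : R) (z w : R[i]) :
  complex.Re (x%:C * z + y%:C * w) = x * complex.Re z + y * complex.Re w.
Proof. by case: z => ? ?; case: w => ? ? /=; ring. Qed.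

Lemma Re_mul (R : realType) (x : R) (z : R[i]) :
  complex.Re (x%:C * z) = x * complex.Re z.
Proof. by case: z => ? ? /=; ring. Qed.

Lemma st_ge0 (R : realType) (d : nat -> nat) (tau : forall n, 'M[R[i]]_(d n)) g n :
  (forall n, tau n \is hermsymmx) -> 0 <= spec_term tau g n.
Proof.
move=> h; rewrite st_eq; have := Re_le (Gf_ge0 (herm_sub (expR (- (n%:R * g))) (h n))).
by [].
Qed.

Lemma st_mono (R : realType) (d : nat -> nat) (tau : forall n, 'M[R[i]]_(d n)) g g' n :
  (forall n, tau n \is hermsymmx) -> g' <= g ->
  spec_term tau g' n <= spec_term tau g n.
Proof.
move=> h gg; rewrite !st_eq; apply: Re_le; apply: Gf_anti => //.
by rewrite ler_expR lerN2 ler_wpM2l.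
Qed.

Lemma st_convex (R : realType) (d : nat -> nat)
  (rho sigma omega : forall n, 'M[R[i]]_(d n)) (t : R) g n :
  (forall n, sigma n \is hermsymmx) -> (forall n, omega n \is hermsymmx) ->
  (forall n, rho n = t%:C *: sigma n + (1 - t)%:C *: omega n) ->
  0 <= t <= 1 ->
  spec_term rho g n <= t * spec_term sigma g n + (1 - t) * spec_term omega g n.
Proof.
move=> hs ho hr ht; rewrite !st_eq hr -Re_lin; apply: Re_le.
exact: Gf_convex.
Qed.

Lemma st_mono2 (R : realType) (d : nat -> nat)
  (rho sigma omega : forall n, 'M[R[i]]_(d n)) (t : R) g g' n :
  (forall n, sigma n \is hermsymmx) -> quantum_source omega ->
  (forall n, rho n = t%:C *: sigma n + (1 - t)%:C *: omega n) ->
  0 < t <= 1 -> expR (- (n%:R * g)) / t <= expR (- (n%:R * g')) ->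
  t * spec_term sigma g' n <= spec_term rho g n.
Proof.
move=> hs ho hr ht hc; rewrite !st_eq hr -Re_mul; apply: Re_le.
have [ho1 ho2 _] := ho n.
apply: (le_trans _ (@Gf_mono R (d n) (sigma n) (omega n) (expR (- (n%:R * g))) t (hs n) ho1 ho2 ht)).
apply: ler_wpM2l; first by rewrite ler0c; case/andP: ht => /ltW.
exact: Gf_anti.
Qed.

Import numFieldNormedType.Exports.
Local Open Scope classical_set_scope.
Local Open Scope ring_scope.
Local Open Scope complex_scope.

Lemma Zlem (R : realType) (u : nat -> R) : (forall n, 0 <= u n) ->
  limn_esup (fun n => (u n)%:E) = 0%E <-> u @ \oo --> 0.
Proof.
move=> u0; split => [H|H].
  have : (fun n => (u n)%:E) @ \oo --> 0%E.
    by apply: limn_esup_le_cvg; rewrite ?H // => n; rewrite lee_fin.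
  by move/fine_cvg.
have : (fun n => (u n)%:E) @ \oo --> 0%E.
  by apply: cvg_EFin => //; apply: nearW.
by move/cvg_limn_einf_sup => [].
Qed.

Lemma sup_approx (R : realType) (g : R) (s : \bar R) :
  (forall g', g' < g -> (g'%:E <= s)%E) -> (g%:E <= s)%E.
Proof.
case: s => [r| |] H //.
- rewrite lee_fin; apply/negPn/negP; rewrite -ltNge => rg.
  have := H ((r + g) / 2); rewrite lee_fin.
  have h1 : (r + g) / 2 < g by lra.
  have h2 : r < (r + g) / 2 by lra.
  by move/(_ h1); rewrite leNgt h2.
- by rewrite leey.
- by have := H (g - 1); rewrite ltrBlDr ltrDl ltr01 => /(_ isT).
Qed.

Definition Sset (R : realType) (d : nat -> nat) (tau : forall n, 'M[R[i]]_(d n)) :=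
  [set g : R | limn_esup (fun n => (spec_term tau g n)%:E) = 0%E].

Lemma dclosed (R : realType) (d : nat -> nat) (tau : forall n, 'M[R[i]]_(d n)) g g' :
  (forall n, tau n \is hermsymmx) -> g' <= g -> Sset tau g -> Sset tau g'.
Proof.
move=> h gg Hg.
have Z := fun g => Zlem (fun n => @st_ge0 R d tau g n h).
apply/(Z g').2; have H := (Z g).1 Hg; apply: (squeeze_cvgr _ (cvg_cst 0) H).
by apply: nearW => n; rewrite st_ge0 // st_mono.
Qed.

Lemma conv_in (R : realType) (d : nat -> nat)
  (rho sigma omega : forall n, 'M[R[i]]_(d n)) (t : R) g :
  (forall n, sigma n \is hermsymmx) -> (forall n, omega n \is hermsymmx) ->
  (forall n, rho n = t%:C *: sigma n + (1 - t)%:C *: omega n) ->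
  0 <= t <= 1 -> Sset sigma g -> Sset omega g -> Sset rho g.
Proof.
move=> hs ho hr ht.
have hrh : forall n, rho n \is hermsymmx by move=> n; rewrite hr; apply: herm_lin.
move=> Hs Ho.
have Z := fun tau (h : forall n, tau n \is hermsymmx) g => Zlem (fun n => @st_ge0 R d tau g n h).
apply/(Z _ hrh g).2; move/(Z _ hs g).1: Hs => Hs; move/(Z _ ho g).1: Ho => Ho.
have H : (fun x => t * spec_term sigma g x + (1 - t) * spec_term omega g x) @ \oo --> t * 0 + (1 - t) * 0.
  exact: (cvgD (cvgMl_tmp (a := t) Hs) (cvgMl_tmp (a := 1 - t) Ho)).
rewrite !mulr0 addr0 in H.
apply: (squeeze_cvgr _ (cvg_cst 0) H).
by apply: nearW => n; rewrite st_ge0 //=; exact: st_convex.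
Qed.

Lemma mono_in (R : realType) (d : nat -> nat)
  (rho sigma omega : forall n, 'M[R[i]]_(d n)) (t : R) g g' :
  (forall n, sigma n \is hermsymmx) -> quantum_source omega ->
  (forall n, rho n = t%:C *: sigma n + (1 - t)%:C *: omega n) ->
  0 < t <= 1 -> Sset rho g -> g' < g -> Sset sigma g'.
Proof.
move=> hs ho hr ht Hg gg.
have hoh : forall n, omega n \is hermsymmx by move=> n; case: (ho n).
have hrh : forall n, rho n \is hermsymmx.
  by move=> n; rewrite hr; apply: herm_lin.
have t0 : 0 < t by case/andP: ht.
have Z := fun tau (h : forall n, tau n \is hermsymmx) g => Zlem (fun n => @st_ge0 R d tau g n h).
apply/(Z _ hs g').2; have H := (Z _ hrh g).1 Hg.
have H' : (fun x => t^-1 * spec_term rho g x) @ \oo --> t^-1 * 0.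
  exact: (cvgMl_tmp (a := t^-1) H).
rewrite mulr0 in H'.
apply: (squeeze_cvgr _ (cvg_cst 0) H').
have dpos : 0 < g - g' by rewrite subr_gt0.
near=> n.
rewrite st_ge0 //= -(ler_pM2l t0) mulrA mulfV ?gt_eqF // mul1r.
apply: (st_mono2 (g := g) (g' := g') (n := n) hs ho hr ht).
rewrite ler_pdivrMr //.
have -> : expR (- (n%:R * g)) = expR (- (n%:R * (g - g'))) * expR (- (n%:R * g')).
  by rewrite -expRD; congr expR; ring.
rewrite [X in _ <= X]mulrC ler_pM2r ?expR_gt0 // expRN.
rewrite -[X in X <= _]div1r ler_pdivrMr ?expR_gt0 //.
apply: (@le_trans _ _ (t * (1 + n%:R * (g - g')))); last first.
  by rewrite ler_pM2l // expR_ge1Dx.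
have hn : t^-1 / (g - g') <= n%:R by near: n; apply: nbhs_infty_ger.
rewrite ler_pdivrMr // in hn.
have : 1 <= t * (n%:R * (g - g')).
  have tn0 : t != 0 by rewrite gt_eqF.
  by rewrite -[X in X <= _](mulfV tn0) ler_pM2l.
move=> a; rewrite mulrDr mulr1; apply: le_trans a _; rewrite lerDr ltW //.
Unshelve. all: by end_near.
Qed.

Local Close Scope complex_scope.
Local Close Scope sesquilinear_scope.
Local Open Scope ring_scope.

Lemma SL1 (R : realType) (A B : set R) :
  (forall g, A g -> forall g', g' < g -> B g') ->
  (ereal_sup [set (g%:E)%E | g in A] <= ereal_sup [set (g%:E)%E | g in B])%E.
Proof.
move=> H; apply: ge_ereal_sup => _ [g Ag <-]; apply: sup_approx => g' lt.
by apply: ereal_sup_ubound; exists g' => //; apply: H Ag _ lt.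
Qed.

Lemma SL2 (R : realType) (d : nat -> nat) (tau : forall n, 'M[R[i]]_(d n)) g b :
  (forall n, tau n \is hermsymmx) ->
  (b <= ereal_sup [set (g%:E)%E | g in Sset tau])%E ->
  ((g%:E)%E < b)%E -> Sset tau g.
Proof.
move=> h bc gb.
have /ereal_sup_gt [_ [g'' Hg'' <-]] := lt_le_trans gb bc.
rewrite lte_fin => lt; apply: dclosed h (ltW lt) Hg''.
Qed.

Unset Implicit Arguments.

Theorem mainTheorem6 (R : realType) (d : nat -> nat)
  (sigma omega : forall n, 'M[R[i]]_(d n)) (t : R) :
  quantum_source sigma -> quantum_source omega ->
  0 < t < 1 ->
  spec_inf_entropy_rate
    (fun n => t%:C%C *: sigma n + (1 - t)%:C%C *: omega n) =
  Order.min (spec_inf_entropy_rate sigma) (spec_inf_entropy_rate omega).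
Proof.
move=> qs qo /andP[t0 t1].
set rho := fun n => _.
have hs : forall n, sigma n \is hermsymmx by move=> n; case: (qs n).
have ho : forall n, omega n \is hermsymmx by move=> n; case: (qo n).
have hr : forall n, rho n = (t%:C)%C *: sigma n + ((1 - t)%:C)%C *: omega n by [].
have hr' : forall n, rho n = ((1 - t)%:C)%C *: omega n + ((1 - (1 - t))%:C)%C *: sigma n.
  by move=> n; rewrite hr addrC subKr.
have hrh : forall n, rho n \is hermsymmx by move=> n; rewrite hr; apply: herm_lin.
have ht : 0 < t <= 1 by rewrite t0 ltW.
have ht' : 0 < 1 - t <= 1 by rewrite subr_gt0 t1 lerBlDr lerDl ltW.
have ht2 : 0 <= t <= 1 by rewrite ltW // ltW.
have E : forall tau : forall n, 'M[R[i]]_(d n),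
  spec_inf_entropy_rate tau = ereal_sup [set (g%:E)%E | g in Sset tau] by [].
rewrite !E.
apply: le_anti; apply/andP; split.
  rewrite le_min; apply/andP; split; apply: SL1 => g Hg g' lt.
    exact: (mono_in hs qo hr ht Hg lt).
  exact: (mono_in ho qs hr' ht' Hg lt).
rewrite ge_min; case/orP: (le_total (ereal_sup [set (g%:E)%E | g in Sset sigma])
                                (ereal_sup [set (g%:E)%E | g in Sset omega])) => bc;
  [apply/orP; left|apply/orP; right]; apply: SL1 => g Hg g' lt.
  apply: (conv_in hs ho hr ht2); first exact: dclosed hs (ltW lt) Hg.
  apply: SL2 ho bc _; apply: (@lt_le_trans _ _ (g%:E)%E); first by rewrite lte_fin.
  by apply: ereal_sup_ubound; exists g.
apply: (conv_in hs ho hr ht2); last exact: dclosed ho (ltW lt) Hg.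
apply: SL2 hs bc _; apply: (@lt_le_trans _ _ (g%:E)%E); first by rewrite lte_fin.
by apply: ereal_sup_ubound; exists g.
Qed.
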